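(* Assume the standing hypotheses below, and fix $n < \omega$. Let $X_n$ be a basis of the free group $G_n$, and let $\mathcal{B}_n$ be the family of all subgroups of $G_n$ generated by subsets of $X_n$. Then the collection $$\mathcal{B}'_n = \{ A \in \mathcal{B}_n : A + G_i \text{ is a pure subgroup of } G \text{ for every } i < \omega \}$$ is a $G(\aleph_0)$-family of the group $G_n$, all of whose members are pure subgroups of $G$.
   Context: Standing hypotheses: $G$ is a torsion-free abelian group and $0 = G_0 < G_1 < \dots < G_n < \dots$ ($n<\omega$) is an ascending chain of subgroups of $G$ such that every $G_n$ is free, every $G_n$ is a pure subgroup of $G$, and $G = \bigcup_{n<\omega} G_n$. A subgroup $H$ of an abelian group $G$ is pure if solubility in $G$ of every equation $nx = h$ with $n\in\mathbb{Z}$, $h\in H$ implies its solubility in $H$. A $G(\aleph_0)$-family of an abelian group $M$ is a collection $\mathcal{C}$ of subgroups of $M$ such that: (i) $0 \in \mathcal{C}$ and $M \in \mathcal{C}$; (ii) $\mathcal{C}$ is closed under unions of ascending chains; (iii) for every $A_0 \in \mathcal{C}$ and every countable subset $H \subseteq M$ there exists $A \in \mathcal{C}$ with $A_0 \cup H \subseteq A$ and $A/A_0$ countable. *)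

(* Defs.v *)
From HB Require Import structures.
From mathcomp Require Import all_boot all_order all_algebra.
Set Implicit Arguments. Unset Strict Implicit. Unset Printing Implicit Defensive.
Import Order.TTheory GRing.Theory Num.Theory.
Local Open Scope ring_scope.

Section Defs.
Variable G : zmodType.

Definition subset_of (A B : G -> Prop) : Prop := forall x, A x -> B x.

Definition torsion_free : Prop :=
  forall (m : nat) (x : G), (0 < m)%N -> x *+ m = 0 -> x = 0.

Definition is_subgroup (H : G -> Prop) : Prop :=
  H 0 /\ forall x y, H x -> H y -> H (x - y).

Definition pure_subgroup (H : G -> Prop) : Prop :=
  is_subgroup H /\
  forall (m : int) (h : G), H h -> (exists x : G, x *~ m = h) ->
    exists y, H y /\ y *~ m = h.

Definition gen (S : G -> Prop) : G -> Prop :=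
  fun x => forall H, is_subgroup H -> subset_of S H -> H x.

Definition independent (X : G -> Prop) : Prop :=
  forall (s : seq G) (c : G -> int), uniq s -> (forall x, x \in s -> X x) ->
    \sum_(x <- s) x *~ c x = 0 -> forall x, x \in s -> c x = 0.

Definition basis (X H : G -> Prop) : Prop :=
  subset_of X H /\ (forall x, H x <-> gen X x) /\ independent X.

Definition free_subgroup (H : G -> Prop) : Prop :=
  is_subgroup H /\ exists X, basis X H.

Definition sumg (A B : G -> Prop) : G -> Prop :=
  fun x => exists a b, A a /\ B b /\ x = a + b.

Definition countable_set (H : G -> Prop) : Prop :=
  exists f : nat -> G, forall h, H h -> exists k, f k = h.

(* A / A0 is countable: countably many cosets a + A0 (a in A) *)
Definition countable_quot (A A0 : G -> Prop) : Prop :=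
  exists f : nat -> G, forall a, A a -> exists k, A0 (a - f k).

Definition G_aleph0_family (C : (G -> Prop) -> Prop) (M : G -> Prop) : Prop :=
  (forall A, C A -> is_subgroup A /\ subset_of A M) /\
  C (fun x => x = 0) /\ C M /\
  (forall Ch : (G -> Prop) -> Prop,
     (exists A, Ch A) -> (forall A, Ch A -> C A) ->
     (forall A B, Ch A -> Ch B -> subset_of A B \/ subset_of B A) ->
     C (fun x => exists A, Ch A /\ A x)) /\
  (forall A0, C A0 -> forall H, subset_of H M -> countable_set H ->
     exists A, C A /\ subset_of A0 A /\ subset_of H A /\ countable_quot A A0).

Definition standing (Gc : nat -> G -> Prop) : Prop :=
  torsion_free /\
  (forall x, Gc 0%N x <-> x = 0) /\
  (forall n, subset_of (Gc n) (Gc n.+1) /\ exists x, Gc n.+1 x /\ ~ Gc n x) /\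
  (forall n, free_subgroup (Gc n)) /\
  (forall n, pure_subgroup (Gc n)) /\
  (forall x, exists n, Gc n x).

Definition Bfam (X : G -> Prop) (A : G -> Prop) : Prop :=
  exists Y, subset_of Y X /\ forall x, A x <-> gen Y x.

Definition Bfam' (Gc : nat -> G -> Prop) (X : G -> Prop) (A : G -> Prop) : Prop :=
  Bfam X A /\ forall i : nat, pure_subgroup (sumg A (Gc i)).

End Defs.

(* Main.v *)
Require Import Defs.
From HB Require Import structures.
From mathcomp Require Import all_boot all_order all_algebra.
From Stdlib Require Import ClassicalEpsilon.
Set Implicit Arguments. Unset Strict Implicit. Unset Printing Implicit Defensive.
Import GRing.Theory.
Local Open Scope ring_scope.

Lemma gen_incl (G : zmodType) (S : G -> Prop) x : S x -> gen S x.
Proof. by move=> Sx H _ sub; apply: sub. Qed.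

Lemma gen_sub (G : zmodType) (S H : G -> Prop) :
  is_subgroup H -> subset_of S H -> subset_of (gen S) H.
Proof. by move=> sH sub x gx; apply: gx. Qed.

Lemma gen_subgroup (G : zmodType) (S : G -> Prop) : is_subgroup (gen S).
Proof.
split; first by move=> H [].
move=> x y gx gy H sH sub; exact: (sH.2 _ _ (gx H sH sub) (gy H sH sub)).
Qed.

Lemma gen_mono (G : zmodType) (S T : G -> Prop) :
  subset_of S T -> subset_of (gen S) (gen T).
Proof.
move=> ST; apply: gen_sub; first exact: gen_subgroup.
by move=> x Sx; apply: gen_incl; exact: ST.
Qed.

Lemma sgN (G : zmodType) (H : G -> Prop) x : is_subgroup H -> H x -> H (- x).
Proof. by move=> [h0 hB] hx; rewrite -sub0r; apply: hB. Qed.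

Lemma sgD (G : zmodType) (H : G -> Prop) x y :
  is_subgroup H -> H x -> H y -> H (x + y).
Proof.
move=> sH hx hy; rewrite -[y]opprK; apply: sH.2 => //; exact: sgN.
Qed.

Lemma sumg_subgroup (G : zmodType) (A B : G -> Prop) :
  is_subgroup A -> is_subgroup B -> is_subgroup (sumg A B).
Proof.
move=> sA sB; split; first by exists 0, 0; rewrite addr0; split; [exact: sA.1|split; [exact: sB.1|]].
move=> x y [a [b [Aa [Bb ->]]]] [a' [b' [Aa' [Bb' ->]]]].
exists (a - a'), (b - b'); split; first exact: sA.2.
split; first exact: sB.2.
by rewrite opprD addrACA.
Qed.

Lemma pure_ext (G : zmodType) (A B : G -> Prop) :
  (forall x, A x <-> B x) -> pure_subgroup A -> pure_subgroup B.
Proof.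
move=> AB [[A0 AB'] P]; split; first split.
- by apply/AB.
- by move=> x y /AB ? /AB ?; apply/AB; apply: AB'.
move=> m h /AB Ah ex; have [y [Ay e]] := P m h Ah ex.
by exists y; split => //; apply/AB.
Qed.

Lemma sumg_absorb (G : zmodType) (A B : G -> Prop) :
  is_subgroup B -> A 0 -> subset_of A B -> forall x, sumg A B x <-> B x.
Proof.
move=> sB A0 AB x; split.
- by move=> [a [b [Aa [Bb ->]]]]; apply: sgD => //; apply: AB.
- by move=> Bx; exists 0, x; rewrite add0r.
Qed.

Lemma chain_mono (G : zmodType) (Gc : nat -> G -> Prop) :
  (forall n, subset_of (Gc n) (Gc n.+1)) ->
  forall i j, (i <= j)%N -> subset_of (Gc i) (Gc j).
Proof.
move=> h i j /subnKC <-; elim: (j - i)%N => [|k IH]; first by rewrite addn0.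
by move=> x /IH; rewrite addnS; apply: h.
Qed.

Lemma choice_fun (A B : Type) (R : A -> B -> Prop) :
  (forall a, exists b, R a b) -> exists f, forall a, R a (f a).
Proof.
move=> h; exists (fun a => proj1_sig (constructive_indefinite_description _ (h a))).
by move=> a; case: (constructive_indefinite_description _ _).
Qed.

Definition pr (k : nat) : nat * nat := odflt (0%N, 0%N) (unpickle k).
Arguments pr : simpl never.
Lemma prK a b : pr (pickle (a, b)) = (a, b).
Proof. by rewrite /pr pickleK. Qed.

Definition rng (G : Type) (f : nat -> G) (x : G) := exists k, f k = x.

Fixpoint lev (G : zmodType) (e : nat -> G) (j : nat) (k : nat) : G :=
  match j with
  | 0%N => if k is k'.+1 then e k' else 0
  | j'.+1 => lev e j' (pr k).1 - lev e j' (pr k).2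
  end.

Definition genum (G : zmodType) (e : nat -> G) (k : nat) : G :=
  lev e (pr k).1 (pr k).2.

Lemma lev0 (G : zmodType) (e : nat -> G) j : exists k, lev e j k = 0.
Proof.
case: j => [|j]; first by exists 0%N.
by exists (pickle (0%N, 0%N)); rewrite /= subrr.
Qed.

Lemma lev_step (G : zmodType) (e : nat -> G) j k :
  exists k', lev e j.+1 k' = lev e j k.
Proof.
have [z hz] := lev0 e j.
by exists (pickle (k, z)); rewrite /= prK hz subr0.
Qed.

Lemma lev_mono (G : zmodType) (e : nat -> G) j j' k : (j <= j')%N ->
  exists k', lev e j' k' = lev e j k.
Proof.
move=> /subnKC <-; elim: (j' - j)%N => [|d [k' IH]]; first by rewrite addn0; exists k.
rewrite addnS; have [k'' h] := lev_step e (j + d) k'.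
by exists k''; rewrite h.
Qed.

Lemma genum_subgroup (G : zmodType) (e : nat -> G) : is_subgroup (rng (genum e)).
Proof.
split; first by exists (pickle (0%N, 0%N)); rewrite /genum prK.
move=> x y [k1 <-] [k2 <-]; rewrite /genum.
set J := maxn (pr k1).1 (pr k2).1.
have [a1 h1] := lev_mono e (pr k1).2 (leq_maxl (pr k1).1 (pr k2).1).
have [a2 h2] := lev_mono e (pr k2).2 (leq_maxr (pr k1).1 (pr k2).1).
exists (pickle (J.+1, pickle (a1, a2))).
by rewrite /genum prK /= prK /= h1 h2.
Qed.

Lemma genum_gen (G : zmodType) (e : nat -> G) (S : G -> Prop) :
  subset_of S (rng e) -> subset_of (gen S) (rng (genum e)).
Proof.
move=> sub; apply: gen_sub; first exact: genum_subgroup.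
move=> x /sub [k <-]; exists (pickle (0%N, k.+1)).
by rewrite /genum prK.
Qed.

Lemma gen_support (G : zmodType) (X : G -> Prop) x : gen X x ->
  exists l : seq G, (forall z, z \in l -> X z) /\ gen (fun z => z \in l) x.
Proof.
move=> gx.
pose D := fun x => exists l : seq G, (forall z, z \in l -> X z) /\ gen (fun z => z \in l) x.
suff: subset_of (gen X) D by apply.
apply: gen_sub.
- split.
  + by exists [::]; split => //; exact: (gen_subgroup _).1.
  + move=> a b [l1 [h1 g1]] [l2 [h2 g2]]; exists (l1 ++ l2); split.
    * by move=> z; rewrite mem_cat => /orP [] ?; [apply: h1|apply: h2].
    * apply: (gen_subgroup _).2.
      - by apply: gen_mono g1 => z zl; rewrite mem_cat zl.
      - by apply: gen_mono g2 => z zl; rewrite mem_cat zl orbT.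
- move=> z Xz; exists [:: z]; split; first by move=> w; rewrite mem_seq1 => /eqP ->.
  by apply: gen_incl; rewrite mem_seq1.
Qed.

Definition flat (G : zmodType) (L : nat -> seq G) (k : nat) : G := nth 0 (L (pr k).1) (pr k).2.
Definition un (G : Type) (e1 e2 : nat -> G) k :=
  if (pr k).1 == 0%N then e1 (pr k).2 else e2 (pr k).2.
Definition stepL (G : zmodType) (chl : G * int * nat -> seq G) (e : nat -> G) (k : nat) : seq G :=
  match (unpickle k : option (nat * int * nat)) with
  | Some (a, m, i) => chl (genum e a, m, i) | None => [::] end.
Definition step (G : zmodType) chl (e : nat -> G) := un e (flat (stepL chl e)).
Definition Eseq (G : zmodType) chl (init : nat -> G) j := iter j (step chl) init.
Definition Etot (G : zmodType) chl (init : nat -> G) k := Eseq chl init (pr k).1 (pr k).2.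

Lemma rng_flat (G : zmodType) (L : nat -> seq G) a z : z \in L a -> rng (flat L) z.
Proof. by move=> zL; exists (pickle (a, index z (L a))); rewrite /flat prK /= nth_index. Qed.

Lemma step_old (G : zmodType) chl (e : nat -> G) x : rng e x -> rng (step chl e) x.
Proof. by move=> [b <-]; exists (pickle (0%N, b)); rewrite /step /un prK. Qed.

Lemma step_new (G : zmodType) chl (e : nat -> G) a m i z :
  z \in chl (genum e a, m, i) -> rng (step chl e) z.
Proof.
move=> zl; have [q hq] : rng (flat (stepL chl e)) z.
  by apply: (@rng_flat _ _ (pickle (a, m, i))); rewrite /stepL pickleK.
by exists (pickle (1%N, q)); rewrite /step /un prK.
Qed.

Lemma E_mono (G : zmodType) chl (init : nat -> G) j j' x : (j <= j')%N ->
  rng (Eseq chl init j) x -> rng (Eseq chl init j') x.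
Proof.
move=> /subnKC <-; elim: (j' - j)%N => [|d IH]; first by rewrite addn0.
by move=> /IH; rewrite addnS /Eseq iterS; apply: step_old.
Qed.

Lemma E_tot (G : zmodType) chl (init : nat -> G) j x :
  rng (Eseq chl init j) x -> rng (Etot chl init) x.
Proof. by move=> [k <-]; exists (pickle (j, k)); rewrite /Etot prK. Qed.

Lemma L1 (G : zmodType) (a t g c : G) : a + t + g - (t + c) = a + g - c.
Proof. by rewrite [a + t + g]addrAC opprD addrA addrK. Qed.
Lemma L2 (G : zmodType) (a t g c : G) : t + c + (a + g - c) = a + t + g.
Proof. by rewrite -addrA [c + _]addrC subrK addrCA addrA. Qed.

Lemma step5 (G : zmodType) (Gc : nat -> G -> Prop) (n : nat) (X : G -> Prop)
  (HGn : forall x, Gc n x <-> gen X x)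
  (mono : forall i j, (i <= j)%N -> subset_of (Gc i) (Gc j))
  (pureGc : forall i, pure_subgroup (Gc i))
  (A0 : G -> Prop) (Y0 : G -> Prop) (Y0X : subset_of Y0 X)
  (A0Y : forall x, A0 x <-> gen Y0 x)
  (pA0 : forall i, pure_subgroup (sumg A0 (Gc i)))
  (H : G -> Prop) (HGn' : subset_of H (Gc n)) (cH : countable_set H) :
  exists A, Bfam' Gc X A /\ subset_of A0 A /\ subset_of H A /\ countable_quot A A0.
Proof.
case: cH => f hf.
have H1 : forall k, exists l : seq G, Gc n (f k) ->
    (forall z, z \in l -> X z) /\ gen (fun z => z \in l) (f k).
  move=> k; case: (classic (Gc n (f k))) => [hk|nk].
    by have [l hl] := @gen_support _ X (f k) (proj1 (HGn (f k)) hk); exists l.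
  by exists [::].
have [hs Hhs] := choice_fun H1.
have H2 : forall t : G * int * nat, exists l : seq G,
    (exists c y, sumg A0 (Gc t.2) c /\ Gc n y /\ t.1.1 + c = y *~ t.1.2) ->
    exists c y, sumg A0 (Gc t.2) c /\ t.1.1 + c = y *~ t.1.2 /\
      (forall z, z \in l -> X z) /\ gen (fun z => z \in l) y.
  move=> -[[s m] i] /=.
  case: (classic (exists c y, sumg A0 (Gc i) c /\ Gc n y /\ s + c = y *~ m)) =>
    [[c [y [hc [hy e]]]]|nh].
  - have [l [lX ly]] := @gen_support _ X y (proj1 (HGn y) hy).
    by exists l => _; exists c, y.
  - by exists [::] => h; case: nh.
have [chl Hchl] := choice_fun H2.
pose init := flat hs.
pose Y'' := fun x => X x /\ rng (Etot chl init) x.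
pose Y := fun x => Y0 x \/ Y'' x.
have YX : subset_of Y X by move=> x [/Y0X|[]].
have A0A : subset_of A0 (gen Y).
  by move=> x /A0Y; apply: gen_mono => z; left.
have Y''A : subset_of (gen Y'') (gen Y) by apply: gen_mono => z; right.
have dec : forall a, gen Y a -> exists a0 t, A0 a0 /\ gen Y'' t /\ a = a0 + t.
  move=> a ga.
  have : sumg (gen Y0) (gen Y'') a.
    apply: (gen_sub (sumg_subgroup (gen_subgroup _) (gen_subgroup _)) _ ga).
    move=> z [Y0z|Y''z].
    + by exists z, 0; rewrite addr0; split; [apply: gen_incl|split; [exact: (gen_subgroup _).1|]].
    + by exists 0, z; rewrite add0r; split; [exact: (gen_subgroup _).1|split; [apply: gen_incl|]].
  by move=> [a0 [t [g0 [gt ->]]]]; exists a0, t; split => //; apply/A0Y.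
have Ulev : forall t, gen Y'' t ->
    exists j, gen (fun x => X x /\ rng (Eseq chl init j) x) t.
  move=> t gt.
  pose U := fun t => exists j, gen (fun x => X x /\ rng (Eseq chl init j) x) t.
  apply: (gen_sub (H := U) _ _ gt).
  - split; first by exists 0%N; exact: (gen_subgroup _).1.
    move=> x y [j1 g1] [j2 g2]; exists (maxn j1 j2); apply: (gen_subgroup _).2.
    + apply: gen_mono g1 => z [Xz rz]; split => //; apply: E_mono rz; exact: leq_maxl.
    + apply: gen_mono g2 => z [Xz rz]; split => //; apply: E_mono rz; exact: leq_maxr.
  - move=> x [Xx [k hk]]; exists (pr k).1; apply: gen_incl; split => //.
    by exists (pr k).2.
have GnA : subset_of (gen Y) (Gc n) by move=> x gx; apply/HGn; exact: gen_mono YX x gx.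
exists (gen Y); split; last split; last split.
- split; first by exists Y; split.
  move=> i; case: (leqP i n) => [iln | /ltnW nli]; last first.
    apply: pure_ext (pureGc i) => x; apply: iff_sym; apply: sumg_absorb.
    + exact: (pureGc i).1.
    + exact: (gen_subgroup _).1.
    + by move=> z /GnA; apply: mono.
  split; first exact: sumg_subgroup (gen_subgroup _) (pureGc i).1.
  move=> m h [a [g [ga [gg ->]]]] [x hx].
  have [a0 [t [a0A [gt eq]]]] := dec a ga; subst a.
  have [j gj] := Ulev t gt.
  have [q hq] : rng (genum (Eseq chl init j)) t.
    by apply: (genum_gen (S := fun x => X x /\ rng (Eseq chl init j) x)) gj => z [].
  have Bc0 : sumg A0 (Gc i) (a0 + g) by exists a0, g.
  have hyp : exists c y, sumg A0 (Gc i) c /\ Gc n y /\ t + c = y *~ m.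
    have tGn : Gc n (t + (a0 + g)).
      apply: sgD; first exact: (pureGc n).1.
      + exact: GnA (Y''A t gt).
      + apply: sgD; first exact: (pureGc n).1.
        * exact: GnA (A0A a0 a0A).
        * exact: mono iln g gg.
    have hx' : x *~ m = t + (a0 + g) by rewrite hx [t + _]addrCA addrA.
    have [y [hy ey]] := (pureGc n).2 m _ tGn (ex_intro _ x hx').
    by exists (a0 + g), y.
  have [c' [y' [Bc' [e' [lX ly']]]]] := Hchl (t, m, i) hyp.
  simpl in Bc', e'.
  have Bd : sumg A0 (Gc i) ((a0 + g) - c') := (pA0 i).1.2 _ _ Bc0 Bc'.
  have hd : (x - y') *~ m = a0 + g - c' by rewrite mulrzBl hx -e' L1.
  have [z [Bz ez]] := (pA0 i).2 m _ Bd (ex_intro _ (x - y') hd).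
  case: Bz => [a1 [g1 [a1A [g1G ez']]]].
  have y'A : gen Y y'.
    have sub : subset_of (fun z => z \in chl (t, m, i)) Y.
      move=> w hw; right; split; first exact: lX.
      apply: (E_tot (j := j.+1)); rewrite -hq in hw.
      exact: step_new hw.
    exact: gen_mono sub _ ly'.
  exists (y' + z); split.
    exists (y' + a1), g1; split; first by apply: (sgD (gen_subgroup Y)) => //; exact: A0A.
    by split => //; rewrite ez' addrA.
  by rewrite mulrzDl ez -e' L2.
- exact: A0A.
- move=> h Hh; have [k hk] := hf h Hh; subst h.
  have [lX lg] := Hhs k (HGn' _ Hh).
  have sub : subset_of (fun z => z \in hs k) Y.
    move=> w hw; right; split; first exact: lX.
    apply: (E_tot (j := 0%N)); exact: rng_flat hw.
  exact: gen_mono sub _ lg.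
- exists (genum (Etot chl init)) => a ga.
  have [a0 [t [a0A [gt ->]]]] := dec a ga.
  have [k hk] : rng (genum (Etot chl init)) t.
    by apply: (genum_gen (S := Y'')) gt => z [].
  by exists k; rewrite hk addrK.
Qed.

Lemma sumg_absorb_l (G : zmodType) (A B : G -> Prop) :
  is_subgroup A -> B 0 -> subset_of B A -> forall x, sumg A B x <-> A x.
Proof.
move=> sA B0 BA x; split.
- by move=> [a [b [Aa [Bb ->]]]]; apply: sgD => //; apply: BA.
- by move=> Ax; exists x, 0; rewrite addr0.
Qed.

Theorem lemma2 (G : zmodType) (Gc : nat -> G -> Prop) (n : nat) (X : G -> Prop) :
  standing Gc -> basis X (Gc n) ->
  G_aleph0_family (Bfam' Gc X) (Gc n) /\
  (forall A, Bfam' Gc X A -> pure_subgroup A).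
Proof.
move=> [tf [G0 [chain [free [pureGc un]]]]] [XGn [HGn indep]].
have mono := chain_mono (fun k => (chain k).1).
have fam1 : forall A, Bfam' Gc X A -> is_subgroup A /\ subset_of A (Gc n).
  move=> A [[Y [YX AY]] _]; split; first split.
  - by apply/AY; exact: (gen_subgroup Y).1.
  - by move=> x y /AY hx /AY hy; apply/AY; exact: (gen_subgroup Y).2.
  - by move=> x /AY gx; apply/HGn; exact: gen_mono YX x gx.
split; last first.
  move=> A hA; have [sA _] := fam1 A hA.
  apply: pure_ext (hA.2 0%N) => x; split.
  - by move=> [a [b [Aa [/G0 -> ->]]]]; rewrite addr0.
  - by move=> Ax; exists x, 0; rewrite addr0; split => //; split => //; apply/G0.
split; first exact: fam1.
split.
  split.
    exists (fun _ => False); split; first by [].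
    move=> x; split; first by move->; exact: (gen_subgroup _).1.
    move=> gx; apply: (gx (fun x => x = 0)) => //.
    by split => // a b -> ->; rewrite subrr.
  move=> i; apply: pure_ext (pureGc i) => x; apply: iff_sym; apply: sumg_absorb => //.
  - exact: (pureGc i).1.
  - by move=> z ->; exact: (pureGc i).1.1.
split.
  split; first by exists X; split.
  move=> i; case: (leqP i n) => [iln | /ltnW nli].
  - apply: pure_ext (pureGc n) => x; apply: iff_sym; apply: sumg_absorb_l.
    + exact: (pureGc n).1.
    + exact: (pureGc i).1.1.
    + exact: mono.
  - apply: pure_ext (pureGc i) => x; apply: iff_sym; apply: sumg_absorb.
    + exact: (pureGc i).1.
    + exact: (pureGc n).1.1.
    + exact: mono.
split.
  move=> Ch [A0 hA0] hC hchain.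
  pose U := fun x => exists A, Ch A /\ A x.
  have Usub : is_subgroup U.
    split; first by exists A0; split => //; exact: (fam1 A0 (hC A0 hA0)).1.1.
    move=> x y [A [ChA Ax]] [B [ChB By]].
    case: (hchain A B ChA ChB) => sub.
    + exists B; split => //; apply: (fam1 B (hC B ChB)).1.2 => //; exact: sub.
    + exists A; split => //; apply: (fam1 A (hC A ChA)).1.2 => //; exact: sub.
  split.
    exists (fun x => X x /\ U x); split; first by move=> x [].
    move=> x; split.
    - move=> [A [ChA Ax]]; have [[YA [YAX AYA]] _] := hC A ChA.
      have sub : subset_of YA (fun x => X x /\ U x).
        move=> z hz; split; first exact: YAX.
        by exists A; split => //; apply/AYA; exact: gen_incl.
      by apply: gen_mono sub _ _; apply/AYA.
    - by move=> gx; apply: (gen_sub Usub _ gx) => z [].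
  move=> i; split; first exact: sumg_subgroup Usub (pureGc i).1.
  move=> m h [u [g [[A [ChA Au]] [gg ->]]]] ex.
  have [y [[a [b [Aa [Bb e]]]] ey]] := ((hC A ChA).2 i).2 m (u + g)
    (ex_intro _ u (ex_intro _ g (conj Au (conj gg erefl)))) ex.
  by exists y; split => //; exists a, b; split => //; exists A.
move=> A0 hA0 Hs HGn' cH.
have [[Y0 [Y0X A0Y]] pA0] := hA0.
exact: (step5 HGn mono pureGc Y0X A0Y pA0 HGn' cH).
Qed.
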